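(* Let $S,T$ be finite sets, $E\subseteq S\times T$, and for $y\in\mathbb{R}^S_+$ and $x\in\mathbb{R}^E_{+}$ define \[ \mathcal I(y;x)=\sum_{t\in T}\Big(1-\prod_{(s,t)\in E} x_{st}^{\,y(s)}\Big). \] Then for each fixed $y\ge 0$, the function $x\mapsto \mathcal I(y;x)$ is continuous submodular on the nonnegative orthant $\mathbb{R}^E_+$.
   Context: A function $g$ on a subset of $\mathbb{R}^m$ is continuous submodular if $g(x)+g(x')\ge g(x\vee x')+g(x\wedge x')$ for all $x,x'$ in its domain, where $\vee,\wedge$ are coordinatewise maximum and minimum. *)

(* Defs.v *)
From HB Require Import structures.
From mathcomp Require Import all_boot all_order all_algebra.
From mathcomp Require Import all_classical all_reals all_analysis.
Set Implicit Arguments. Unset Strict Implicit. Unset Printing Implicit Defensive.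
Import Order.TTheory GRing.Theory Num.Theory.
Local Open Scope ring_scope.

Definition edges (S T : finType) (E : {set S * T}) : finType :=
  {p : S * T | p \in E}.

(* I(y; x) = sum_{t in T} (1 - prod_{(s,t) in E} x_{st}^{y(s)}),
   with real powers via powR (convention 0 `^ 0 = 1). *)
Definition influence (R : realType) (S T : finType) (E : {set S * T})
  (y : S -> R) (x : edges E -> R) : R :=
  \sum_(t : T) (1 - \prod_(e : edges E | (val e).2 == t) (x e) `^ (y (val e).1)).

Definition nonneg_orthant (R : realType) (I : finType) : set (I -> R) :=
  [set x | forall i, 0 <= x i].

Definition cont_submodular (R : realType) (I : finType) (D : set (I -> R))
  (g : (I -> R) -> R) : Prop :=
  forall x x' : I -> R, D x -> D x' ->
    g (fun i => Num.max (x i) (x' i)) + g (fun i => Num.min (x i) (x' i))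
      <= g x + g x'.

(* Main.v *)
Require Import Defs.
From HB Require Import structures.
From mathcomp Require Import all_boot all_order all_algebra.
From mathcomp Require Import all_classical all_reals all_analysis.
From mathcomp Require Import lra.
Import Order.TTheory GRing.Theory Num.Theory.
Local Open Scope ring_scope.

Lemma key_prod (R : realType) (I : Type) (r : seq I) (a b : I -> R) :
  (forall i, 0 <= a i) -> (forall i, 0 <= b i) ->
  \prod_(i <- r) a i + \prod_(i <- r) b i <=
  \prod_(i <- r) Num.max (a i) (b i) + \prod_(i <- r) Num.min (a i) (b i).
Proof.
move=> a0 b0.
have Ha : \prod_(i <- r) a i <= \prod_(i <- r) Num.max (a i) (b i).
  by apply: ler_prod => i _; rewrite a0 le_max lexx.
have Hb : \prod_(i <- r) b i <= \prod_(i <- r) Num.max (a i) (b i).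
  by apply: ler_prod => i _; rewrite b0 le_max lexx orbT.
have Hma : \prod_(i <- r) Num.min (a i) (b i) <= \prod_(i <- r) a i.
  by apply: ler_prod => i _; rewrite le_min a0 b0 ge_min lexx.
have Hmb : \prod_(i <- r) Num.min (a i) (b i) <= \prod_(i <- r) b i.
  by apply: ler_prod => i _; rewrite le_min a0 b0 ge_min lexx orbT.
elim: r Ha Hb Hma Hmb => [|i r IH] Ha Hb Hma Hmb; first by rewrite !big_nil.
rewrite !big_cons.
have pa : 0 <= \prod_(j <- r) a j by apply: prodr_ge0.
have pb : 0 <= \prod_(j <- r) b j by apply: prodr_ge0.
have pM : \prod_(j <- r) a j <= \prod_(j <- r) Num.max (a j) (b j).
  by apply: ler_prod => j _; rewrite a0 le_max lexx.
have pM' : \prod_(j <- r) b j <= \prod_(j <- r) Num.max (a j) (b j).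
  by apply: ler_prod => j _; rewrite b0 le_max lexx orbT.
have pm : \prod_(j <- r) Num.min (a j) (b j) <= \prod_(j <- r) a j.
  by apply: ler_prod => j _; rewrite le_min a0 b0 ge_min lexx.
have pm' : \prod_(j <- r) Num.min (a j) (b j) <= \prod_(j <- r) b j.
  by apply: ler_prod => j _; rewrite le_min a0 b0 ge_min lexx orbT.
have ih := IH pM pM' pm pm'.
move: pa pb pM pM' pm pm' ih.
set A := \prod_(j <- r) a j; set B := \prod_(j <- r) b j.
set M := \prod_(j <- r) Num.max (a j) (b j).
set m := \prod_(j <- r) Num.min (a j) (b j).
move=> pa pb pM pM' pm pm' ih.
have ai := a0 i; have bi := b0 i.
case: (leP (a i) (b i)) => h.
  (* b*M + a*m - a*A - b*B = b(M-B) + a(m-A) >= a(M-B+m-A) >= 0 *)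
  have h1 : a i * (M - B) <= b i * (M - B) by apply: ler_wpM2r; rewrite ?subr_ge0.
  have h2 : 0 <= a i * (M + m - A - B).
    by apply: mulr_ge0 => //; lra.
  nra.
- have h' : b i <= a i by apply: ltW.
  have h1 : b i * (M - A) <= a i * (M - A) by apply: ler_wpM2r; rewrite ?subr_ge0.
  have h2 : 0 <= b i * (M + m - A - B).
    by apply: mulr_ge0 => //; lra.
  nra.
Qed.

Theorem corollary1 (R : realType) (S T : finType) (E : {set S * T})
  (y : S -> R) (hy : forall s, 0 <= y s) :
  cont_submodular (@nonneg_orthant R (edges E)) (@influence R S T E y).
Proof.
move=> x x' hx hx'; rewrite /influence -!big_split /=.
apply: ler_sum => t _.
set P := (fun e : edges E => (val e).2 == t).
have mono : forall e : edges E, forall u v : R, 0 <= u -> u <= v ->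
    u `^ y (val e).1 <= v `^ y (val e).1.
  move=> e u v u0 uv; apply: (ge0_ler_powR (hy _)) => //.
  by rewrite nnegrE (le_trans u0 uv).
have emax : forall e : edges E, Num.max (x e) (x' e) `^ y (val e).1 =
   Num.max (x e `^ y (val e).1) (x' e `^ y (val e).1).
  move=> e; case: (leP (x e) (x' e)) => h.
    by rewrite (max_idPr (mono e _ _ (hx e) h)).
  by rewrite (max_idPl (mono e _ _ (hx' e) (ltW h))).
have emin : forall e : edges E, Num.min (x e) (x' e) `^ y (val e).1 =
   Num.min (x e `^ y (val e).1) (x' e `^ y (val e).1).
  move=> e; case: (leP (x e) (x' e)) => h.
    by rewrite (min_idPl (mono e _ _ (hx e) h)).
  by rewrite (min_idPr (mono e _ _ (hx' e) (ltW h))).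
have K := @key_prod R _ [seq e <- index_enum (edges E) | P e]
  (fun e => x e `^ y (val e).1) (fun e => x' e `^ y (val e).1)
  (fun e => powR_ge0 (x e) (y (val e).1)) (fun e => powR_ge0 (x' e) (y (val e).1)).
rewrite !big_filter /= in K.
have E1 : \prod_(e | (val e).2 == t) Num.max (x e) (x' e) `^ y (val e).1 = \prod_(e | (val e).2 == t) Num.max (x e `^ y (val e).1) (x' e `^ y (val e).1).
  by apply: eq_bigr => e _; exact: emax.
have E2 : \prod_(e | (val e).2 == t) Num.min (x e) (x' e) `^ y (val e).1 = \prod_(e | (val e).2 == t) Num.min (x e `^ y (val e).1) (x' e `^ y (val e).1).
  by apply: eq_bigr => e _; exact: emin.
rewrite E1 E2.
move: K.
set p1 := \prod_(e | _) Num.max _ _.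
set p2 := \prod_(e | _) Num.min _ _.
set p3 := \prod_(e | _) (x e `^ _).
set p4 := \prod_(e | _) (x' e `^ _).
move=> K.
lra.
Qed.
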